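(* Let $H$ be a $C^2$ null hypersurface, $n$ a $C^1$ future-directed lightlike vector field tangent to $H$, extended near $p\in H$ to a $C^1$ lightlike field with $\nabla_nn=\kappa n$. Let $V$ be a smooth future-directed timelike vector field and use local cylinder coordinates $(x^0,\mathbf x)$ with $V=\partial_0$ in which $H$ is the graph of a $C^2$ function $x^0=h(\mathbf x)$. Define on $H$ the functions of $\mathbf x$ $$\tilde n^i=-g(n,V)\,\big[g^{ij}(h(\mathbf x),\mathbf x)\,\partial_jh-g^{i0}(h(\mathbf x),\mathbf x)\big],\quad i=1,\dots,n,$$ and $\theta=\nabla_\mu n^\mu|_{x^0=h(\mathbf x)}-\kappa$. Then for every $C^1$ function $\varphi:M\to\mathbb R$, $$\partial_i\Big(\varphi\,\tilde n^i\,\frac{\sqrt{-|g|(h(\mathbf x),\mathbf x)}}{-g(n,V)}\Big)=\big[\varphi\,\theta+\partial_n\varphi\big]\frac{\sqrt{-|g|(h(\mathbf x),\mathbf x)}}{-g(n,V)},$$ where all quantities are evaluated at $(h(\mathbf x),\mathbf x)$. Consequently $$\theta=\frac{-g(n,V)}{\sqrt{-|g|}}\,\partial_i\Big\{\big[g^{ij}\partial_jh-g^{i0}\big]\sqrt{-|g|}\Big\}\Big|_{x^0=h(\mathbf x)} .$$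
   Context: Spacetime: paracompact time-oriented Lorentzian manifold of dimension $n+1\ge2$, signature $(-,+,\dots,+)$, $C^3$ metric; $|g|$ denotes $\det g_{\mu\nu}$, $g^{\mu\nu}$ the inverse metric. Local cylinder coordinates: with $S$ a small hypersurface transverse to $V$ carrying coordinates $\mathbf x=(x^1,\dots,x^n)$, the point $\varphi_{x^0}(\mathbf x)$ ($\varphi$ the flow of $V$) has coordinates $(x^0,\mathbf x)$, so $V=\partial_0$. The vector field $\tilde n=\tilde n^i\partial_i$ is the projection of $n$ along the flow of $V$. *)

(* Defs.v *)
From Stdlib Require Import Reals Lra ClassicalEpsilon.
Open Scope R_scope.

Fixpoint sumlt (m : nat) (f : nat -> R) : R :=
  match m with
  | O => 0
  | S m' => sumlt m' f + f m'
  end.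

Definition minorR (A : nat -> nat -> R) (j : nat) : nat -> nat -> R :=
  fun r c => A (S r) (if Nat.ltb c j then c else S c).

Fixpoint detR (m : nat) (A : nat -> nat -> R) : R :=
  match m with
  | O => 1
  | S m' => sumlt (S m') (fun j => (-1) ^ j * A 0%nat j * detR m' (minorR A j))
  end.

Definition upd (x : nat -> R) (k : nat) (t : R) : nat -> R :=
  fun j => if Nat.eqb j k then t else x j.

Definition has_partial (F : (nat -> R) -> R) (k : nat) (x : nat -> R) (l : R) : Prop :=
  derivable_pt_lim (fun t => F (upd x k t)) (x k) l.

Definition pd (F : (nat -> R) -> R) (k : nat) (x : nat -> R) : R :=
  epsilon (inhabits 0) (fun l => has_partial F k x l).

Definition near (d : nat) (x y : nat -> R) (delta : R) : Prop :=
  forall k, (k < d)%nat -> Rabs (y k - x k) < delta.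

Definition is_open (d : nat) (U : (nat -> R) -> Prop) : Prop :=
  forall x, U x -> exists delta, 0 < delta /\ forall y, near d x y delta -> U y.

Definition cont_on (d : nat) (U : (nat -> R) -> Prop) (F : (nat -> R) -> R) : Prop :=
  forall x, U x -> forall eps, 0 < eps -> exists delta, 0 < delta /\
    forall y, U y -> near d x y delta -> Rabs (F y - F x) < eps.

Fixpoint Ck (d k : nat) (U : (nat -> R) -> Prop) (F : (nat -> R) -> R) : Prop :=
  match k with
  | O => cont_on d U F
  | S k' =>
      (forall j x, (j < d)%nat -> U x -> exists l, has_partial F j x l) /\
      (forall j, (j < d)%nat -> Ck d k' U (pd F j))
  end.

(* ---------- Lorentzian geometry in a chart of dimension dim+1 ----------
   Coordinates x^0, x^1, ..., x^dim ; the metric is given by its component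
   functions g mu nu, and its inverse by gi mu nu. *)

Definition gdot (dim : nat) (g : nat -> nat -> (nat -> R) -> R) (P : nat -> R)
  (u v : nat -> R) : R :=
  sumlt (S dim) (fun mu => sumlt (S dim) (fun nu => g mu nu P * u mu * v nu)).

Definition minkowski (a b : nat) : R :=
  if Nat.eqb a b then (if Nat.eqb a 0 then -1 else 1) else 0.

Definition lorentzian_at (dim : nat) (g : nat -> nat -> (nat -> R) -> R) (P : nat -> R) : Prop :=
  exists e : nat -> nat -> R,
    forall a b, (a <= dim)%nat -> (b <= dim)%nat -> gdot dim g P (e a) (e b) = minkowski a b.

Definition Gam (dim : nat) (g gi : nat -> nat -> (nat -> R) -> R) (mu nu la : nat)
  (P : nat -> R) : R :=
  / 2 * sumlt (S dim) (fun s =>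
     gi mu s P * (pd (g s la) nu P + pd (g s nu) la P - pd (g nu la) s P)).

Definition nabla_vv (dim : nat) (g gi : nat -> nat -> (nat -> R) -> R)
  (v : (nat -> R) -> nat -> R) (mu : nat) (P : nat -> R) : R :=
  sumlt (S dim) (fun nu => v P nu * pd (fun Q => v Q mu) nu P)
  + sumlt (S dim) (fun nu => sumlt (S dim) (fun la =>
        Gam dim g gi mu nu la P * v P nu * v P la)).

Definition divg (dim : nat) (g gi : nat -> nat -> (nat -> R) -> R)
  (v : (nat -> R) -> nat -> R) (P : nat -> R) : R :=
  sumlt (S dim) (fun mu => pd (fun Q => v Q mu) mu P
     + sumlt (S dim) (fun nu => Gam dim g gi mu mu nu P * v P nu)).

(* the point (h(x), x) ; spatial coordinate x^i (i = 1..dim) is xs (i-1) *)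
Definition gpt (h : (nat -> R) -> R) (xs : nat -> R) : nat -> R :=
  fun mu => match mu with O => h xs | S i => xs i end.

Definition detg (dim : nat) (g : nat -> nat -> (nat -> R) -> R) (P : nat -> R) : R :=
  detR (S dim) (fun mu nu => g mu nu P).

(* g(n, V) with V = partial_0 *)
Definition gnV (dim : nat) (g : nat -> nat -> (nat -> R) -> R)
  (nv : (nat -> R) -> nat -> R) (P : nat -> R) : R :=
  sumlt (S dim) (fun mu => g mu 0%nat P * nv P mu).

Definition Ncomp (dim : nat) (gi : nat -> nat -> (nat -> R) -> R) (h : (nat -> R) -> R)
  (i : nat) (xs : nat -> R) : R :=
  sumlt dim (fun j => gi i (S j) (gpt h xs) * pd h j xs) - gi i 0%nat (gpt h xs).

(* Main.v *)
Require Import Defs.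
From Stdlib Require Import Reals Lra Lia ClassicalEpsilon FunctionalExtensionality Classical.
Open Scope R_scope.

Lemma sumlt_ext m f g : (forall i, (i < m)%nat -> f i = g i) -> sumlt m f = sumlt m g.
Proof. induction m; simpl; intros H; [reflexivity|]. rewrite IHm by (intros; apply H; lia). rewrite H by lia; reflexivity. Qed.

Lemma sumlt_plus m f g : sumlt m (fun i => f i + g i) = sumlt m f + sumlt m g.
Proof. induction m; simpl; [ring|]. rewrite IHm; ring. Qed.

Lemma sumlt_minus m f g : sumlt m (fun i => f i - g i) = sumlt m f - sumlt m g.
Proof. induction m; simpl; [ring|]. rewrite IHm; ring. Qed.

Lemma sumlt_scal_l m c f : sumlt m (fun i => c * f i) = c * sumlt m f.
Proof. induction m; simpl; [ring|]. rewrite IHm; ring. Qed.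

Lemma sumlt_scal_r m c f : sumlt m (fun i => f i * c) = sumlt m f * c.
Proof. induction m; simpl; [ring|]. rewrite IHm; ring. Qed.

Lemma sumlt_opp m f : sumlt m (fun i => - f i) = - sumlt m f.
Proof. induction m; simpl; [ring|]. rewrite IHm; ring. Qed.

Lemma sumlt_zero m f : (forall i, (i < m)%nat -> f i = 0) -> sumlt m f = 0.
Proof. intros H. rewrite (sumlt_ext m f (fun _ => 0)) by auto. induction m; simpl; [ring|]. rewrite IHm by (intros; apply H; lia). ring. Qed.

Lemma sumlt_shift m f : sumlt (S m) f = f 0%nat + sumlt m (fun i => f (S i)).
Proof. induction m; simpl in *; [ring|]. rewrite IHm; ring. Qed.

Lemma sumlt_swap m n f : sumlt m (fun i => sumlt n (fun j => f i j)) = sumlt n (fun j => sumlt m (fun i => f i j)).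
Proof. induction m; simpl.
 - symmetry; apply sumlt_zero; auto.
 - rewrite IHm. rewrite <- sumlt_plus. reflexivity. Qed.

Lemma sumlt_delta_l m i f : (i < m)%nat -> sumlt m (fun k => (if Nat.eqb k i then 1 else 0) * f k) = f i.
Proof. induction m; intros H; [lia|]. simpl. destruct (Nat.eq_dec i m).
 - subst. rewrite Nat.eqb_refl. rewrite sumlt_zero. ring. intros k Hk. destruct (Nat.eqb_spec k m); [lia|ring].
 - rewrite IHm by lia. destruct (Nat.eqb_spec m i); [lia|ring]. Qed.

Lemma sumlt_delta_r m i f : (i < m)%nat -> sumlt m (fun k => (if Nat.eqb i k then 1 else 0) * f k) = f i.
Proof. intros H. rewrite <- (sumlt_delta_l m i f H). apply sumlt_ext. intros k _. rewrite Nat.eqb_sym. reflexivity. Qed.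

Lemma deriv_sumlt m (f : nat -> R -> R) (l : nat -> R) t0 :
  (forall i, (i < m)%nat -> derivable_pt_lim (f i) t0 (l i)) ->
  derivable_pt_lim (fun t => sumlt m (fun i => f i t)) t0 (sumlt m l).
Proof. induction m; simpl; intros H.
 - apply (derivable_pt_lim_const 0).
 - apply (derivable_pt_lim_plus (fun t => sumlt m (fun i => f i t)) (f m)).
   apply IHm; intros; apply H; lia. apply H; lia. Qed.

Lemma deriv_mult f g lf lg t0 : derivable_pt_lim f t0 lf -> derivable_pt_lim g t0 lg ->
  derivable_pt_lim (fun t => f t * g t) t0 (lf * g t0 + f t0 * lg).
Proof. intros; apply (derivable_pt_lim_mult f g); auto. Qed.

Lemma deriv_plus f g lf lg t0 : derivable_pt_lim f t0 lf -> derivable_pt_lim g t0 lg ->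
  derivable_pt_lim (fun t => f t + g t) t0 (lf + lg).
Proof. intros; apply (derivable_pt_lim_plus f g); auto. Qed.

Lemma deriv_minus f g lf lg t0 : derivable_pt_lim f t0 lf -> derivable_pt_lim g t0 lg ->
  derivable_pt_lim (fun t => f t - g t) t0 (lf - lg).
Proof. intros; apply (derivable_pt_lim_minus f g); auto. Qed.

Lemma deriv_opp f lf t0 : derivable_pt_lim f t0 lf ->
  derivable_pt_lim (fun t => - f t) t0 (- lf).
Proof. intros; apply (derivable_pt_lim_opp f); auto. Qed.

Lemma deriv_const c t0 : derivable_pt_lim (fun _ => c) t0 0.
Proof. apply (derivable_pt_lim_const c). Qed.

Lemma deriv_id t0 : derivable_pt_lim (fun t => t) t0 1.
Proof. apply derivable_pt_lim_id. Qed.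

Lemma deriv_scal c f lf t0 : derivable_pt_lim f t0 lf ->
  derivable_pt_lim (fun t => c * f t) t0 (c * lf).
Proof. intros; apply (derivable_pt_lim_scal f); auto. Qed.



Lemma deriv_inv f lf t0 : derivable_pt_lim f t0 lf -> f t0 <> 0 ->
  derivable_pt_lim (fun t => / f t) t0 (- lf / (f t0 * f t0)).
Proof. intros H1 H2.
  assert (H := derivable_pt_lim_div (fun _ => 1) f t0 0 lf (derivable_pt_lim_const 1 t0) H1 H2).
  replace (- lf / (f t0 * f t0)) with ((0 * f t0 - lf * 1) / (f t0)²) by (unfold Rsqr; field; auto).
  eapply derivable_pt_lim_ext; [|exact H]. intros z; unfold div_fct, Rdiv. simpl. ring. Qed.

Lemma deriv_sqrt f lf t0 : derivable_pt_lim f t0 lf -> 0 < f t0 ->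
  derivable_pt_lim (fun t => sqrt (f t)) t0 (lf / (2 * sqrt (f t0))).
Proof. intros H1 H2.
  assert (H := derivable_pt_lim_comp f sqrt t0 lf _ H1 (derivable_pt_lim_sqrt _ H2)).
  replace (lf / (2 * sqrt (f t0))) with (/ (2 * sqrt (f t0)) * lf) by (unfold Rdiv; ring).
  exact H. Qed.

Lemma deriv_loc f g t0 l : (exists d, 0 < d /\ forall t, Rabs (t - t0) < d -> f t = g t) ->
  derivable_pt_lim f t0 l -> derivable_pt_lim g t0 l.
Proof. intros [d [Hd H]]. apply derivable_pt_lim_locally_ext with (t0 - d) (t0 + d). lra.
  intros z Hz. apply H. apply Rabs_def1; lra. Qed.

Lemma pd_unique F k x l : has_partial F k x l -> pd F k x = l.
Proof. intros H. unfold pd. pose proof (epsilon_spec (inhabits 0) (fun l => has_partial F k x l) (ex_intro _ l H)) as H'.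
  apply (uniqueness_limite _ _ _ _ H' H). Qed.

Lemma pd_spec F k x : (exists l, has_partial F k x l) -> has_partial F k x (pd F k x).
Proof. intros [l H]. rewrite (pd_unique F k x l H). exact H. Qed.

Lemma mvt2 f f' x y : (forall c, Rmin x y <= c <= Rmax x y -> derivable_pt_lim f c (f' c)) ->
  exists c, Rmin x y <= c <= Rmax x y /\ f y - f x = f' c * (y - x).
Proof. intros H. destruct (Rtotal_order x y) as [Hxy|[Hxy|Hxy]].
 - destruct (MVT_cor2 f f' x y Hxy) as [c [H1 H2]].
   { intros c Hc. apply H. rewrite Rmin_left, Rmax_right by lra. lra. }
   exists c. rewrite Rmin_left, Rmax_right by lra. split; [lra|auto].
 - subst. exists y. rewrite Rmin_left, Rmax_left by lra. split; [lra|ring].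
 - destruct (MVT_cor2 f f' y x Hxy) as [c [H1 H2]].
   { intros c Hc. apply H. rewrite Rmin_right, Rmax_left by lra. lra. }
   exists c. rewrite Rmin_right, Rmax_left by lra. split; [lra|]. lra. Qed.

Lemma upd_upd x k s t : upd (upd x k s) k t = upd x k t.
Proof. apply functional_extensionality; intro j; unfold upd. destruct (Nat.eqb j k); auto. Qed.

Lemma upd_same x k : upd x k (x k) = x.
Proof. apply functional_extensionality; intro j; unfold upd. destruct (Nat.eqb_spec j k); subst; auto. Qed.

Lemma upd_eq x k t : upd x k t k = t.
Proof. unfold upd. rewrite Nat.eqb_refl. auto. Qed.

Lemma upd_neq x k t j : j <> k -> upd x k t j = x j.
Proof. intros H. unfold upd. destruct (Nat.eqb_spec j k); [lia|auto]. Qed.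

Lemma deriv_bound f x l : derivable_pt_lim f x l ->
  exists d, 0 < d /\ forall h, Rabs h < d -> Rabs (f (x + h) - f x) <= (Rabs l + 1) * Rabs h.
Proof. intros H. destruct (H 1 Rlt_0_1) as [d Hd]. exists d. split; [apply cond_pos|].
  intros h Hh. destruct (Req_dec h 0) as [->|Hh0].
  - rewrite Rplus_0_r, Rminus_diag, Rabs_R0. lra.
  - specialize (Hd h Hh0 Hh).
    assert (E : f (x+h) - f x = ((f (x + h) - f x) / h - l) * h + l * h) by (field; auto).
    rewrite E. eapply Rle_trans; [apply Rabs_triang|]. rewrite !Rabs_mult.
    pose proof (Rabs_pos h). pose proof (Rabs_pos l). nra. Qed.

Lemma between_abs c x y : Rmin x y <= c <= Rmax x y -> Rabs (c - x) <= Rabs (y - x).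
Proof. unfold Rmin, Rmax. destruct (Rle_dec x y); intros H;
  unfold Rabs; repeat destruct Rcase_abs; lra. Qed.

Section Chain.
Variable d : nat.
Variable U : (nat -> R) -> Prop.
Hypothesis HU : is_open d U.
Variable Phi : (nat -> R) -> R.
Variable P : nat -> R.
Variable k : nat.
Hypothesis Hk : (0 < k < d)%nat.
Hypothesis HP : U P.
Hypothesis Hpart0 : forall Q, U Q -> has_partial Phi 0 Q (pd Phi 0 Q).
Hypothesis Hcont0 : forall eps, 0 < eps -> exists delta, 0 < delta /\
   forall s t, Rabs (s - P 0%nat) < delta -> Rabs (t - P k) < delta ->
     Rabs (pd Phi 0 (upd (upd P k t) 0 s) - pd Phi 0 P) < eps.
Variable lk : R.
Hypothesis Hlk : has_partial Phi k P lk.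
Variable a : R -> R.
Variable a' : R.
Hypothesis Ha : derivable_pt_lim a (P k) a'.
Hypothesis Ha0 : a (P k) = P 0%nat.

Let Q s t := upd (upd P k t) 0 s.

Lemma near_Q s t dl : Rabs (s - P 0%nat) < dl -> Rabs (t - P k) < dl -> near d P (Q s t) dl.
Proof. intros H1 H2 j Hj. unfold Q, upd. destruct (Nat.eqb_spec j 0); subst; auto.
  destruct (Nat.eqb_spec j k); subst; auto. rewrite Rminus_diag, Rabs_R0. pose proof (Rabs_pos (t - P k)). lra. Qed.

Lemma chain_A : derivable_pt_lim (fun t => Phi (Q (a t) t) - Phi (Q (P 0%nat) t)) (P k) (pd Phi 0 P * a').
Proof.
  intros eps Heps.
  destruct (HU P HP) as [dU [HdU HdU']].
  set (D := pd Phi 0 P).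
  destruct (Hcont0 (eps / (2 * (Rabs a' + 1)))) as [dc [Hdc Hdc']].
  { apply Rdiv_lt_0_compat; [lra|]. pose proof (Rabs_pos a'); lra. }
  destruct (deriv_bound _ _ _ Ha) as [db [Hdb Hdb']].
  destruct (Ha (eps / (2 * (Rabs D + 1)))) as [da Hda].
  { apply Rdiv_lt_0_compat; [lra|]. pose proof (Rabs_pos D); lra. }
  set (m := Rmin (Rmin dU dc) (Rmin db da)).
  set (m2 := Rmin m (m / (Rabs a' + 1))).
  assert (Hm : 0 < m). { unfold m. pose proof (cond_pos da). repeat apply Rmin_pos; lra. }
  assert (Hm2 : 0 < m2). { unfold m2. apply Rmin_pos; auto. apply Rdiv_lt_0_compat; auto. pose proof (Rabs_pos a'); lra. }
  exists (mkposreal m2 Hm2). intros h Hh0 Hh. simpl in Hh.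
  assert (Hhm : Rabs h < m) by (unfold m2 in Hh; pose proof (Rmin_l m (m / (Rabs a' + 1))); lra).
  assert (Hhm' : Rabs h < m / (Rabs a' + 1)) by (unfold m2 in Hh; pose proof (Rmin_r m (m / (Rabs a' + 1))); lra).
  assert (HmdU : m <= dU) by (unfold m; eapply Rle_trans; [apply Rmin_l|apply Rmin_l]).
  assert (Hmdc : m <= dc) by (unfold m; eapply Rle_trans; [apply Rmin_l|apply Rmin_r]).
  assert (Hmdb : m <= db) by (unfold m; eapply Rle_trans; [apply Rmin_r|apply Rmin_l]).
  assert (Hmda : m <= da) by (unfold m; eapply Rle_trans; [apply Rmin_r|apply Rmin_r]).
  set (t := P k + h).
  assert (Hbnd := Hdb' h ltac:(lra)).
  assert (Hat : Rabs (a t - P 0%nat) < m).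
  { rewrite <- Ha0. unfold t. eapply Rle_lt_trans; [exact Hbnd|].
    pose proof (Rabs_pos a'). pose proof (Rabs_pos h).
    apply Rmult_lt_compat_l with (r := Rabs a' + 1) in Hhm'; [|lra].
    replace ((Rabs a' + 1) * (m / (Rabs a' + 1))) with m in Hhm' by (field; lra). lra. }
  assert (Hth : Rabs (t - P k) = Rabs h) by (unfold t; f_equal; ring).
  destruct (mvt2 (fun s => Phi (Q s t)) (fun s => pd Phi 0 (Q s t)) (P 0%nat) (a t)) as [xi [Hxi Hmvt]].
  { intros c Hc.
    assert (Hc' : Rabs (c - P 0%nat) < m) by (pose proof (between_abs _ _ _ Hc); lra).
    assert (HQ : U (Q c t)) by (apply HdU'; apply near_Q; lra).
    specialize (Hpart0 _ HQ). unfold has_partial in Hpart0.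
    unfold Q in *. rewrite upd_eq in Hpart0. eapply derivable_pt_lim_ext; [|exact Hpart0]. intros z; simpl; rewrite upd_upd; reflexivity. }
  simpl in Hmvt.
  assert (Hxi' : Rabs (xi - P 0%nat) < m)
  by (pose proof (between_abs _ _ _ Hxi); lra).
  assert (Hc1 : Rabs (pd Phi 0 (Q xi t) - D) < eps / (2 * (Rabs a' + 1))).
  { apply Hdc'; lra. }
  assert (Hq := Hda h Hh0 ltac:(lra)).
  fold t in Hq. rewrite Ha0 in Hq.
  replace (P k + h) with t by reflexivity. rewrite Hmvt. rewrite Ha0, Rminus_diag, Rminus_0_r.
  set (q := (a t - P 0%nat) / h). fold q in Hq.
  replace (pd Phi 0 (Q xi t) * (a t - P 0%nat) / h - D * a') with
     ((pd Phi 0 (Q xi t) - D) * q + D * (q - a')) by (unfold q; field; auto).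
  eapply Rle_lt_trans; [apply Rabs_triang|]. rewrite !Rabs_mult.
  assert (Hqb : Rabs q <= Rabs a' + 1).
  { unfold q. unfold Rdiv. rewrite Rabs_mult, Rabs_inv. rewrite <- Ha0. unfold t.
    apply Rabs_pos_lt in Hh0. apply (Rmult_le_reg_r (Rabs h)); auto.
    rewrite Rmult_assoc, Rinv_l by lra. lra. }
  pose proof (Rabs_pos (pd Phi 0 (Q xi t) - D)). pose proof (Rabs_pos D). pose proof (Rabs_pos a').
  assert (E1 : Rabs (pd Phi 0 (Q xi t) - D) * Rabs q <= eps / (2 * (Rabs a' + 1)) * (Rabs a' + 1)).
  { apply Rmult_le_compat; auto; [apply Rabs_pos|lra]. }
  replace (eps / (2 * (Rabs a' + 1)) * (Rabs a' + 1)) with (eps/2) in E1 by (field; lra).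
  assert (E2 : Rabs D * Rabs (q - a') <= Rabs D * (eps / (2 * (Rabs D + 1)))).
  { apply Rmult_le_compat_l; auto; lra. }
  assert (E3 : Rabs D * (eps / (2 * (Rabs D + 1))) < eps / 2).
  { apply (Rmult_lt_reg_r (2 * (Rabs D + 1))); [lra|].
    replace (Rabs D * (eps / (2 * (Rabs D + 1))) * (2 * (Rabs D + 1))) with (Rabs D * eps) by (field; lra).
    nra. }
  lra.
Qed.

Lemma chain2 : derivable_pt_lim (fun t => Phi (upd (upd P k t) 0 (a t))) (P k) (pd Phi 0 P * a' + lk).
Proof.
  eapply derivable_pt_lim_ext; [|apply (deriv_plus _ _ _ _ _ chain_A Hlk)].
  intros t. simpl. unfold Q. replace (upd (upd P k t) 0 (P 0%nat)) with (upd P k t). ring.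
  apply functional_extensionality; intro j. unfold upd. destruct (Nat.eqb_spec j 0); subst; auto.
  destruct (Nat.eqb_spec 0 k); [lia|auto].
Qed.
End Chain.

Definition plane_cont_at (F : (nat -> R) -> R) (P : nat -> R) (k : nat) : Prop :=
  forall eps, 0 < eps -> exists delta, 0 < delta /\
   forall s t, Rabs (s - P 0%nat) < delta -> Rabs (t - P k) < delta ->
     Rabs (F (upd (upd P k t) 0 s) - F P) < eps.

Definition plane_bdd (F : (nat -> R) -> R) (P : nat -> R) (k : nat) : Prop :=
  exists delta M, 0 < delta /\
   forall s t, Rabs (s - P 0%nat) < delta -> Rabs (t - P k) < delta ->
     Rabs (F (upd (upd P k t) 0 s)) <= M.

Lemma pc_bdd F P k : plane_cont_at F P k -> plane_bdd F P k.
Proof. intros H. destruct (H 1 Rlt_0_1) as [d [Hd H']]. exists d, (Rabs (F P) + 1). split; auto.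
  intros s t Hs Ht. specialize (H' s t Hs Ht).
  pose proof (Rabs_triang_inv (F (upd (upd P k t) 0 s)) (F P)). lra. Qed.

Lemma cont_on_pc d U F P k : is_open d U -> U P -> (0 < k < d)%nat -> cont_on d U F -> plane_cont_at F P k.
Proof. intros HU HP Hk HF eps Heps. destruct (HU P HP) as [dU [HdU HdU']].
  destruct (HF P HP eps Heps) as [dc [Hdc Hdc']].
  exists (Rmin dU dc). split. apply Rmin_pos; auto.
  intros s t Hs Ht. pose proof (Rmin_l dU dc). pose proof (Rmin_r dU dc).
  assert (Hn : forall dl, Rabs (s - P 0%nat) < dl -> Rabs (t - P k) < dl -> near d P (upd (upd P k t) 0 s) dl).
  { intros dl H1 H2 j Hj. unfold upd. destruct (Nat.eqb_spec j 0); subst; auto.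
    destruct (Nat.eqb_spec j k); subst; auto. rewrite Rminus_diag, Rabs_R0. pose proof (Rabs_pos (t - P k)). lra. }
  apply Hdc'. apply HdU'. apply Hn; lra. apply Hn; lra. Qed.

Lemma plane_cont d U F P k : is_open d U -> U P -> (0 < k < d)%nat ->
  (forall Q, U Q -> has_partial F 0 Q (pd F 0 Q)) ->
  (forall Q, U Q -> has_partial F k Q (pd F k Q)) ->
  plane_bdd (pd F 0) P k -> plane_bdd (pd F k) P k -> plane_cont_at F P k.
Proof.
  intros HU HP Hk H0 Hk' [d0 [M0 [Hd0 HM0]]] [d1 [M1 [Hd1 HM1]]] eps Heps.
  destruct (HU P HP) as [dU [HdU HdU']].
  set (M := Rabs M0 + Rabs M1 + 1).
  assert (HM : 0 < M) by (unfold M; pose proof (Rabs_pos M0); pose proof (Rabs_pos M1); lra).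
  set (m := Rmin (Rmin dU d0) (Rmin d1 (eps / (4 * M)))).
  assert (Hm : 0 < m). { unfold m. repeat apply Rmin_pos; auto. apply Rdiv_lt_0_compat; lra. }
  assert (HmdU : m <= dU) by (unfold m; eapply Rle_trans; [apply Rmin_l|apply Rmin_l]).
  assert (Hmd0 : m <= d0) by (unfold m; eapply Rle_trans; [apply Rmin_l|apply Rmin_r]).
  assert (Hmd1 : m <= d1) by (unfold m; eapply Rle_trans; [apply Rmin_r|apply Rmin_l]).
  assert (Hme : m <= eps / (4 * M)) by (unfold m; eapply Rle_trans; [apply Rmin_r|apply Rmin_r]).
  exists m. split; auto. intros s t Hs Ht.
  assert (Hn : forall s' t', Rabs (s' - P 0%nat) < m -> Rabs (t' - P k) < m -> U (upd (upd P k t') 0 s')).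
  { intros s' t' H1 H2. apply HdU'. intros j Hj. unfold upd. destruct (Nat.eqb_spec j 0); subst; [lra|].
    destruct (Nat.eqb_spec j k); subst; [lra|]. rewrite Rminus_diag, Rabs_R0; lra. }
  destruct (mvt2 (fun s' => F (upd (upd P k t) 0 s')) (fun s' => pd F 0 (upd (upd P k t) 0 s')) (P 0%nat) s) as [xi [Hxi E1]].
  { intros c Hc. pose proof (between_abs _ _ _ Hc).
    specialize (H0 _ (Hn c t ltac:(lra) Ht)). unfold has_partial in H0. rewrite upd_eq in H0.
    eapply derivable_pt_lim_ext; [|exact H0]. intros z; simpl; rewrite upd_upd; reflexivity. }
  destruct (mvt2 (fun t' => F (upd P k t')) (fun t' => pd F k (upd P k t')) (P k) t) as [tau [Htau E2]].
  { intros c Hc. pose proof (between_abs _ _ _ Hc).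
    assert (HU' : U (upd P k c)).
    { replace (upd P k c) with (upd (upd P k c) 0 (P 0%nat)). apply Hn; [rewrite Rminus_diag, Rabs_R0|]; lra.
      rewrite <- (upd_same (upd P k c) 0) at 2. rewrite upd_neq by lia. reflexivity. }
    specialize (Hk' _ HU'). unfold has_partial in Hk'. rewrite upd_eq in Hk'.
    eapply derivable_pt_lim_ext; [|exact Hk']. intros z; simpl; rewrite upd_upd; reflexivity. }
  simpl in E1, E2.
  assert (Eq0 : upd (upd P k t) 0 (P 0%nat) = upd P k t).
  { rewrite <- (upd_same (upd P k t) 0) at 2. rewrite upd_neq by lia. reflexivity. }
  rewrite Eq0 in E1. rewrite upd_same in E2.
  pose proof (between_abs _ _ _ Hxi). pose proof (between_abs _ _ _ Htau).
  assert (B0 : Rabs (pd F 0 (upd (upd P k t) 0 xi)) <= M).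
  { eapply Rle_trans; [apply HM0; lra|]. unfold M. pose proof (Rle_abs M0). pose proof (Rabs_pos M1). lra. }
  assert (B1 : Rabs (pd F k (upd P k tau)) <= M).
  { replace (upd P k tau) with (upd (upd P k tau) 0 (P 0%nat)).
    eapply Rle_trans; [apply HM1; [rewrite Rminus_diag, Rabs_R0|]; lra|]. unfold M. pose proof (Rle_abs M1). pose proof (Rabs_pos M0). lra.
    rewrite <- (upd_same (upd P k tau) 0) at 2. rewrite upd_neq by lia. reflexivity. }
  replace (F (upd (upd P k t) 0 s) - F P) with
     (pd F 0 (upd (upd P k t) 0 xi) * (s - P 0%nat) + pd F k (upd P k tau) * (t - P k)) by lra.
  eapply Rle_lt_trans; [apply Rabs_triang|]. rewrite !Rabs_mult.
  assert (Rabs (pd F 0 (upd (upd P k t) 0 xi)) * Rabs (s - P 0%nat) <= M * m).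
  { apply Rmult_le_compat; try apply Rabs_pos; lra. }
  assert (Rabs (pd F k (upd P k tau)) * Rabs (t - P k) <= M * m).
  { apply Rmult_le_compat; try apply Rabs_pos; lra. }
  assert (M * m <= M * (eps / (4 * M))) by (apply Rmult_le_compat_l; lra).
  replace (M * (eps / (4 * M))) with (eps / 4) in * by (field; lra). lra.
Qed.

Lemma Ck3_pc d U F P k : is_open d U -> U P -> (0 < k < d)%nat -> Ck d 3 U F -> plane_cont_at (pd F 0) P k.
Proof.
  intros HU HP Hk [_ H3].
  assert (Hd0 : (0 < d)%nat) by lia.
  destruct (H3 0%nat Hd0) as [H1p H2].
  set (F1 := pd F 0) in *.
  assert (HF2 : forall j, (j < d)%nat -> plane_bdd (pd F1 j) P k).
  { intros j Hj. destruct (H2 j Hj) as [H2p H2c]. apply pc_bdd.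
    apply plane_cont with d U; auto; first [ intros Q HQ; apply pd_spec; apply H2p; auto; lia |
       apply pc_bdd; apply cont_on_pc with d U; auto; apply H2c; lia ]. }
  apply plane_cont with d U; auto; first [ intros Q HQ; apply pd_spec; apply H1p; auto; lia | apply HF2; lia ].
Qed.

Definition rowrep (A : nat -> nat -> R) (i : nat) (r : nat -> R) : nat -> nat -> R :=
  fun a b => if Nat.eqb a i then r b else A a b.

Lemma minor_rowrep0 A j r : minorR (rowrep A 0 r) j = minorR A j.
Proof. reflexivity. Qed.

Lemma minor_rowrepS A j r B : minorR (rowrep A (S r) B) j = rowrep (minorR A j) r (fun c => B (if Nat.ltb c j then c else S c)).
Proof. reflexivity. Qed.

Lemma detR_S m A : detR (S m) A = sumlt (S m) (fun j => (-1) ^ j * A 0%nat j * detR m (minorR A j)).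
Proof. reflexivity. Qed.

Lemma detR_ext m A B : (forall a b, (a < m)%nat -> (b < m)%nat -> A a b = B a b) -> detR m A = detR m B.
Proof. revert A B; induction m; intros A B H; [reflexivity|]. rewrite !detR_S.
  apply sumlt_ext; intros j Hj. rewrite H by lia. f_equal. apply IHm.
  intros a b Ha Hb. unfold minorR. apply H. lia. destruct (Nat.ltb_spec b j); lia. Qed.

Lemma deriv_detR m (A : R -> nat -> nat -> R) (A' : nat -> nat -> R) t0 :
  (forall a b, (a < m)%nat -> (b < m)%nat -> derivable_pt_lim (fun t => A t a b) t0 (A' a b)) ->
  derivable_pt_lim (fun t => detR m (A t)) t0 (sumlt m (fun i => detR m (rowrep (A t0) i (A' i)))).
Proof. revert A A'; induction m; intros A A' H.
 - simpl. apply deriv_const.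
 - eapply derivable_pt_lim_ext; [intro; symmetry; apply detR_S|].
   assert (HD : derivable_pt_lim (fun t => sumlt (S m) (fun j => (-1) ^ j * A t 0%nat j * detR m (minorR (A t) j))) t0
      (sumlt (S m) (fun j => (-1)^j * (A' 0%nat j * detR m (minorR (A t0) j) + A t0 0%nat j *
          sumlt m (fun r => detR m (rowrep (minorR (A t0) j) r (minorR A' j r))))))).
   { apply (deriv_sumlt (S m) (fun j t => (-1) ^ j * A t 0%nat j * detR m (minorR (A t) j))).
     intros j Hj.
     eapply derivable_pt_lim_ext; [intro; symmetry; apply Rmult_assoc|].
     apply deriv_scal.
     replace (A' 0%nat j * detR m (minorR (A t0) j) + A t0 0%nat j * sumlt m (fun r => detR m (rowrep (minorR (A t0) j) r (minorR A' j r))))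
       with (A' 0%nat j * detR m (minorR (A t0) j) + A t0 0%nat j * sumlt m (fun r => detR m (rowrep (minorR (A t0) j) r (minorR A' j r)))) by reflexivity.
     apply (deriv_mult (fun t => A t 0%nat j) (fun t => detR m (minorR (A t) j))).
     apply H; lia.
     apply (IHm (fun t => minorR (A t) j) (minorR A' j)).
     intros a b Ha Hb. unfold minorR. apply H. lia. destruct (Nat.ltb_spec b j); lia. }
   set (A0 := A t0) in *.
   replace (sumlt (S m) (fun i => detR (S m) (rowrep A0 i (A' i)))) with
     (sumlt (S m) (fun j => (-1) ^ j * (A' 0%nat j * detR m (minorR A0 j) + A0 0%nat j *
          sumlt m (fun r => detR m (rowrep (minorR A0 j) r (minorR A' j r)))))); [exact HD|].
   transitivity (sumlt (S m) (fun j => (-1)^j * A' 0%nat j * detR m (minorR A0 j)) +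
     sumlt m (fun r => sumlt (S m) (fun j => (-1)^j * A0 0%nat j * detR m (rowrep (minorR A0 j) r (minorR A' j r))))).
   + rewrite (sumlt_ext (S m) _ (fun j => (-1)^j * A' 0%nat j * detR m (minorR A0 j) +
        sumlt m (fun r => (-1)^j * A0 0%nat j * detR m (rowrep (minorR A0 j) r (minorR A' j r))))).
     * rewrite sumlt_plus. f_equal. apply sumlt_swap.
     * intros j _. rewrite (sumlt_scal_l m ((-1)^j * A0 0%nat j) (fun r => detR m (rowrep (minorR A0 j) r (minorR A' j r)))).
       ring.
   + rewrite (sumlt_shift m (fun i => detR (S m) (rowrep A0 i (A' i)))). f_equal.
Qed.

Section Main.
Variable dim : nat.
Hypothesis Hdim : (1 <= dim)%nat.
Variable U : (nat -> R) -> Prop.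
Hypothesis HU : is_open (S dim) U.
Variables g gi : nat -> nat -> (nat -> R) -> R.
Hypothesis Hg3 : forall mu nu, (mu <= dim)%nat -> (nu <= dim)%nat -> Ck (S dim) 3 U (g mu nu).
Hypothesis Hgsym : forall mu nu P, U P -> g mu nu P = g nu mu P.
Hypothesis Hginv : forall mu nu P, (mu <= dim)%nat -> (nu <= dim)%nat -> U P ->
     sumlt (S dim) (fun s => g mu s P * gi s nu P) = (if Nat.eqb mu nu then 1 else 0).
Hypothesis Hlor : forall P, U P -> lorentzian_at dim g P.
Variable Om : (nat -> R) -> Prop.
Hypothesis HOm : is_open dim Om.
Variable h : (nat -> R) -> R.
Hypothesis Hh2 : Ck dim 2 Om h.
Hypothesis HhU : forall xs, Om xs -> U (gpt h xs).
Hypothesis Hnull : forall xs, Om xs ->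
     let nu := fun mu => match mu with O => 1 | S j => - pd h j xs end in
     sumlt (S dim) (fun mu => sumlt (S dim) (fun la =>
        gi mu la (gpt h xs) * nu mu * nu la)) = 0.
Variable nv : (nat -> R) -> nat -> R.
Hypothesis Hn1 : forall mu, (mu <= dim)%nat -> Ck (S dim) 1 U (fun Q => nv Q mu).
Hypothesis Hnnull : forall P, U P -> gdot dim g P (nv P) (nv P) = 0.
Hypothesis Hntan : forall xs, Om xs ->
     nv (gpt h xs) 0%nat = sumlt dim (fun j => pd h j xs * nv (gpt h xs) (S j)).
Hypothesis Hnfut : forall xs, Om xs -> gnV dim g nv (gpt h xs) < 0.
Variable kappa : (nat -> R) -> R.
Hypothesis Hkappa : forall P mu, U P -> (mu <= dim)%nat ->
     nabla_vv dim g gi nv mu P = kappa P * nv P mu.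

Hypothesis MC_rowrep : forall m A Gi i r, (i < m)%nat ->
  (forall a b, (a < m)%nat -> (b < m)%nat -> sumlt m (fun k => A a k * Gi k b) = if Nat.eqb a b then 1 else 0) ->
  detR m (rowrep A i r) = detR m A * sumlt m (fun k => r k * Gi k i).
Hypothesis MC_detneg : forall m G e, (forall a b, (a <= m)%nat -> (b <= m)%nat ->
  sumlt (S m) (fun mu => sumlt (S m) (fun nu => G mu nu * e a mu * e b nu)) = minkowski a b) ->
  detR (S m) G < 0.
Hypothesis MC_null : forall m G e u v,
  (forall a b, (a <= m)%nat -> (b <= m)%nat ->
    sumlt (S m) (fun mu => sumlt (S m) (fun nu => G mu nu * e a mu * e b nu)) = minkowski a b) ->
  sumlt (S m) (fun mu => sumlt (S m) (fun nu => G mu nu * u mu * u nu)) = 0 ->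
  sumlt (S m) (fun mu => sumlt (S m) (fun nu => G mu nu * v mu * v nu)) = 0 ->
  sumlt (S m) (fun mu => sumlt (S m) (fun nu => G mu nu * u mu * v nu)) = 0 ->
  (exists mu, (mu <= m)%nat /\ v mu <> 0) ->
  exists lam, forall mu, (mu <= m)%nat -> u mu = lam * v mu.

Lemma gi_sym P mu nu : U P -> (mu <= dim)%nat -> (nu <= dim)%nat -> gi mu nu P = gi nu mu P.
Proof.
  intros HP Hmu Hnu.
  transitivity (sumlt (S dim) (fun a => (if Nat.eqb a mu then 1 else 0) * gi a nu P)).
  { symmetry; apply sumlt_delta_l; lia. }
  transitivity (sumlt (S dim) (fun a => sumlt (S dim) (fun b => g a b P * gi b mu P * gi a nu P))).
  { apply sumlt_ext; intros a Ha. rewrite sumlt_scal_r. rewrite Hginv by (auto; lia). reflexivity. }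
  rewrite sumlt_swap.
  transitivity (sumlt (S dim) (fun b => gi b mu P * (if Nat.eqb b nu then 1 else 0))).
  { apply sumlt_ext; intros b Hb. rewrite <- (Hginv b nu P) by (auto; lia). rewrite <- sumlt_scal_l.
    apply sumlt_ext; intros a Ha. rewrite (Hgsym a b P HP). ring. }
  rewrite (sumlt_ext _ _ (fun b => (if Nat.eqb b nu then 1 else 0) * gi b mu P)) by (intros; ring).
  apply sumlt_delta_l; lia.
Qed.

Lemma det_neg P : U P -> detg dim g P < 0.
Proof. intros HP. destruct (Hlor P HP) as [e He]. unfold detg. apply (MC_detneg dim _ e). exact He. Qed.

Definition nlow (ys : nat -> R) (a : nat) : R := match a with O => 1 | S j => - pd h j ys end.
Definition nup (ys : nat -> R) (mu : nat) : R := sumlt (S dim) (fun a => gi mu a (gpt h ys) * nlow ys a).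

Lemma lower_nup ys a : Om ys -> (a <= dim)%nat ->
  sumlt (S dim) (fun b => g a b (gpt h ys) * nup ys b) = nlow ys a.
Proof.
  intros Hys Ha. set (P := gpt h ys). assert (HP : U P) by (apply HhU; auto).
  unfold nup. fold P.
  rewrite (sumlt_ext _ _ (fun b => sumlt (S dim) (fun c => g a b P * gi b c P * nlow ys c))).
  2:{ intros b Hb. rewrite <- sumlt_scal_l. apply sumlt_ext; intros; ring. }
  rewrite sumlt_swap.
  rewrite (sumlt_ext _ _ (fun c => (if Nat.eqb a c then 1 else 0) * nlow ys c)).
  2:{ intros c Hc. rewrite sumlt_scal_r. rewrite Hginv by (auto; lia). reflexivity. }
  apply sumlt_delta_r; lia.
Qed.

Lemma Bf_split (G : nat -> nat -> R) (u v : nat -> R) :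
  sumlt (S dim) (fun mu => sumlt (S dim) (fun nu => G mu nu * u mu * v nu)) =
  sumlt (S dim) (fun mu => u mu * sumlt (S dim) (fun nu => G mu nu * v nu)).
Proof. apply sumlt_ext; intros mu _. rewrite <- sumlt_scal_l. apply sumlt_ext; intros; ring. Qed.

Lemma nv_eq ys mu : Om ys -> (mu <= dim)%nat -> nv (gpt h ys) mu = gnV dim g nv (gpt h ys) * nup ys mu.
Proof.
  intros Hys Hmu. set (P := gpt h ys). assert (HP : U P) by (apply HhU; auto).
  destruct (Hlor P HP) as [e He].
  assert (Hlow : forall a, (a <= dim)%nat -> sumlt (S dim) (fun b => g a b P * nup ys b) = nlow ys a)
    by (intros; apply lower_nup; auto).
  destruct (MC_null dim (fun a b => g a b P) e (nv P) (nup ys)) as [lam Hlam].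
  - exact He.
  - exact (Hnnull P HP).
  - rewrite Bf_split. rewrite (sumlt_ext _ _ (fun mu => nup ys mu * nlow ys mu)).
    2:{ intros m Hm. rewrite Hlow by lia. reflexivity. }
    rewrite <- (Hnull ys Hys). fold P. apply sumlt_ext; intros m Hm. unfold nup. rewrite <- sumlt_scal_r.
    apply sumlt_ext; intros l Hl. unfold nlow, P. ring.
  - rewrite Bf_split. rewrite (sumlt_ext _ _ (fun mu => nv P mu * nlow ys mu)).
    2:{ intros m Hm. rewrite Hlow by lia. reflexivity. }
    rewrite sumlt_shift. simpl. unfold P. rewrite (Hntan ys Hys).
    rewrite Rmult_1_r, <- sumlt_plus. apply sumlt_zero. intros; ring.
  - apply NNPP. intros Hc.
    assert (Hz : forall m, (m <= dim)%nat -> nup ys m = 0).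
    { intros m Hm. apply NNPP. intros Hm'. apply Hc. exists m. auto. }
    assert (H0 := Hlow 0%nat ltac:(lia)). unfold nlow in H0.
    rewrite sumlt_zero in H0. lra. intros i Hi. rewrite Hz by lia. ring.
  - assert (Hc : gnV dim g nv P = lam).
    { unfold gnV. rewrite (sumlt_ext _ _ (fun m => lam * (g 0%nat m P * nup ys m))).
      2:{ intros m Hm. rewrite Hlam by lia. rewrite Hgsym by auto. ring. }
      rewrite sumlt_scal_l. rewrite Hlow by lia. simpl. ring. }
    rewrite Hc. apply Hlam; auto.
Qed.

Lemma Ncomp_nup ys i : Ncomp dim gi h i ys = - nup ys i.
Proof. unfold Ncomp, nup. rewrite sumlt_shift. unfold nlow.
  rewrite (sumlt_ext dim (fun j => gi i (S j) (gpt h ys) * - pd h j ys) (fun j => - (gi i (S j) (gpt h ys) * pd h j ys))) by (intros; ring).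
  rewrite sumlt_opp. ring. Qed.

Lemma ntil_eq ys j : Om ys -> (j < dim)%nat ->
  - gnV dim g nv (gpt h ys) * Ncomp dim gi h (S j) ys = nv (gpt h ys) (S j).
Proof. intros Hys Hj. rewrite Ncomp_nup, nv_eq by (auto; lia). ring. Qed.

Lemma lower_nv ys a : Om ys -> (a <= dim)%nat ->
  sumlt (S dim) (fun b => g a b (gpt h ys) * nv (gpt h ys) b) = gnV dim g nv (gpt h ys) * nlow ys a.
Proof. intros Hys Ha. rewrite <- lower_nup by auto. rewrite <- sumlt_scal_l.
  apply sumlt_ext; intros b Hb. rewrite nv_eq by (auto; lia). ring. Qed.

Definition base (f : (nat -> R) -> R) : Prop :=
  (forall k Q, (k < S dim)%nat -> U Q -> has_partial f k Q (pd f k Q)) /\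
  (forall k P, (0 < k < S dim)%nat -> U P -> plane_cont_at (pd f 0) P k).

Lemma base_Ck1 f : Ck (S dim) 1 U f -> base f.
Proof. intros [H1 H2]. split.
  - intros k Q Hk HQ. apply pd_spec. apply H1; auto.
  - intros k P Hk HP. apply cont_on_pc with (S dim) U; auto. apply H2; lia. Qed.

Lemma base_Ck3 f : Ck (S dim) 3 U f -> base f.
Proof. intros H. split.
  - intros k Q Hk HQ. apply pd_spec. apply (proj1 H); auto.
  - intros k P Hk HP. apply Ck3_pc with (S dim) U; auto. Qed.

Lemma curve_eq xs j t : gpt h (upd xs j t) = upd (upd (gpt h xs) (S j) t) 0 (h (upd xs j t)).
Proof. apply functional_extensionality; intros [|i]; unfold upd, gpt; simpl; auto.
  Qed.

Lemma graph_deriv f xs j : Om xs -> (j < dim)%nat -> base f ->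
  derivable_pt_lim (fun t => f (gpt h (upd xs j t))) (xs j)
    (pd f 0 (gpt h xs) * pd h j xs + pd f (S j) (gpt h xs)).
Proof.
  intros Hxs Hj [Hb1 Hb2]. set (P := gpt h xs). assert (HP : U P) by (apply HhU; auto).
  eapply derivable_pt_lim_ext; [intros t; rewrite curve_eq; reflexivity|].
  change (xs j) with (P (S j)).
  apply (chain2 (S dim) U HU f P (S j)); auto; try lia.
  - exact (Hb2 (S j) P ltac:(lia) HP).
  - apply Hb1; auto; lia.
  - exact (pd_spec _ _ _ (proj1 Hh2 j xs Hj Hxs)).
  - unfold P; simpl; rewrite upd_same; reflexivity.
Qed.

Section AtPoint.
Variable phi : (nat -> R) -> R.
Hypothesis Hphi : Ck (S dim) 1 U phi.
Variable xs : nat -> R.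
Hypothesis Hxs : Om xs.

Let P := gpt h xs.
Let HP : U P := HhU xs Hxs.
Let hj j := pd h j xs.
Let Gi a b := gi a b P.
Let G a b := g a b P.
Let N mu := nv P mu.
Let c := gnV dim g nv P.
Let det := detg dim g P.
Let s := sqrt (- det).
Let dphi mu := pd phi mu P.
Let dN a mu := pd (fun Q => nv Q a) mu P.
Let dG a b mu := pd (g a b) mu P.

Let Dv (w : nat -> R) j := w 0%nat * hj j + w (S j).

Lemma gam0 j : gpt h (upd xs j (xs j)) = P.
Proof. rewrite upd_same. reflexivity. Qed.

Lemma d_phi j : (j < dim)%nat -> derivable_pt_lim (fun t => phi (gpt h (upd xs j t))) (xs j) (Dv dphi j).
Proof. intros Hj. apply graph_deriv; auto. apply base_Ck1; auto. Qed.

Lemma d_nv a j : (a <= dim)%nat -> (j < dim)%nat ->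
  derivable_pt_lim (fun t => nv (gpt h (upd xs j t)) a) (xs j) (Dv (dN a) j).
Proof. intros Ha Hj. apply (graph_deriv (fun Q => nv Q a)); auto. apply base_Ck1; auto. Qed.

Lemma d_g a b j : (a <= dim)%nat -> (b <= dim)%nat -> (j < dim)%nat ->
  derivable_pt_lim (fun t => g a b (gpt h (upd xs j t))) (xs j) (Dv (dG a b) j).
Proof. intros Ha Hb Hj. apply graph_deriv; auto. apply base_Ck3; auto. Qed.

Lemma d_c j : (j < dim)%nat ->
  derivable_pt_lim (fun t => gnV dim g nv (gpt h (upd xs j t))) (xs j)
    (sumlt (S dim) (fun mu => Dv (dG mu 0%nat) j * N mu + G mu 0%nat * Dv (dN mu) j)).
Proof. intros Hj. unfold gnV.
  apply (deriv_sumlt (S dim) (fun mu t => g mu 0%nat (gpt h (upd xs j t)) * nv (gpt h (upd xs j t)) mu)).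
  intros mu Hmu.
  assert (H := deriv_mult _ _ _ _ _ (d_g mu 0 j ltac:(lia) ltac:(lia) Hj) (d_nv mu j ltac:(lia) Hj)).
  simpl in H. rewrite gam0 in H. exact H. Qed.

Lemma d_det j : (j < dim)%nat ->
  derivable_pt_lim (fun t => detg dim g (gpt h (upd xs j t))) (xs j)
    (det * sumlt (S dim) (fun a => sumlt (S dim) (fun b => Dv (dG a b) j * Gi b a))).
Proof. intros Hj. unfold detg.
  assert (H := deriv_detR (S dim) (fun t a b => g a b (gpt h (upd xs j t))) (fun a b => Dv (dG a b) j) (xs j)
     ltac:(intros a b Ha Hb; apply d_g; auto; lia)).
  cbv beta in H. rewrite gam0 in H.
  replace (det * sumlt (S dim) (fun a => sumlt (S dim) (fun b => Dv (dG a b) j * Gi b a))) with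
    (sumlt (S dim) (fun i => detR (S dim) (rowrep (fun a b => g a b P) i (fun b => Dv (dG i b) j)))); [exact H|].
  rewrite <- sumlt_scal_l. apply sumlt_ext; intros i Hi.
  rewrite (MC_rowrep _ _ (fun a b => gi a b P)); auto. intros a b Ha Hb. apply Hginv; auto; lia.
Qed.

Let T j := sumlt (S dim) (fun a => sumlt (S dim) (fun b => Dv (dG a b) j * Gi b a)).
Let Dc j := sumlt (S dim) (fun mu => Dv (dG mu 0%nat) j * N mu + G mu 0%nat * Dv (dN mu) j).
Let Ds j := - (det * T j) / (2 * s).

Lemma c_neg : c < 0.
Proof. apply Hnfut; auto. Qed.

Lemma det_negP : det < 0.
Proof. apply det_neg; auto. Qed.

Lemma s_pos : 0 < s.
Proof. apply sqrt_lt_R0. pose proof det_negP; lra. Qed.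

Lemma d_s j : (j < dim)%nat ->
  derivable_pt_lim (fun t => sqrt (- detg dim g (gpt h (upd xs j t)))) (xs j) (Ds j).
Proof. intros Hj. assert (H := deriv_sqrt _ _ _ (deriv_opp _ _ _ (d_det j Hj))).
  cbv beta in H. rewrite gam0 in H. apply H. pose proof det_negP. fold det. lra. Qed.

Definition Fs (j : nat) (ys : nat -> R) := phi (gpt h ys) *
   (- gnV dim g nv (gpt h ys) * Ncomp dim gi h (S j) ys) *
   (sqrt (- detg dim g (gpt h ys)) / (- gnV dim g nv (gpt h ys))).

Let DY j := (Dv dphi j * N (S j) + phi P * Dv (dN (S j)) j) * (s * / (- c)) +
   phi P * N (S j) * (Ds j * / (- c) + s * (- (- Dc j) / ((- c) * (- c)))).

Lemma d_F j : (j < dim)%nat -> derivable_pt_lim (fun t => Fs j (upd xs j t)) (xs j) (DY j).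
Proof. intros Hj.
  assert (Hc : - c <> 0) by (pose proof c_neg; lra).
  assert (H1 := deriv_mult _ _ _ _ _ (d_phi j Hj) (d_nv (S j) j ltac:(lia) Hj)).
  assert (H2 := deriv_inv _ _ _ (deriv_opp _ _ _ (d_c j Hj))).
  cbv beta in H2. rewrite gam0 in H2. specialize (H2 Hc).
  assert (H3 := deriv_mult _ _ _ _ _ (d_s j Hj) H2).
  assert (H4 := deriv_mult _ _ _ _ _ H1 H3).
  cbv beta in H4. rewrite !gam0 in H4.
  eapply deriv_loc; [|exact H4].
  destruct (HOm xs Hxs) as [d [Hd Hd']]. exists d. split; auto. intros t Ht.
  assert (Hys : Om (upd xs j t)).
  { apply Hd'. intros k Hk. unfold upd. destruct (Nat.eqb_spec k j); subst; auto.
    rewrite Rminus_diag, Rabs_R0; lra. }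
  unfold Fs. rewrite ntil_eq by auto. unfold Rdiv. ring.
Qed.

Lemma nder w : sumlt dim (fun j => Dv w j * N (S j)) = sumlt (S dim) (fun mu => N mu * w mu).
Proof. unfold Dv. rewrite sumlt_shift.
  rewrite (sumlt_ext dim _ (fun j => w 0%nat * (hj j * N (S j)) + N (S j) * w (S j))) by (intros; ring).
  rewrite sumlt_plus, sumlt_scal_l. assert (E := Hntan xs Hxs). change (N 0%nat = sumlt dim (fun i => hj i * N (S i))) in E. rewrite <- E. ring. Qed.

Let wT mu := sumlt (S dim) (fun a => sumlt (S dim) (fun b => dG a b mu * Gi b a)).
Let wc nu := sumlt (S dim) (fun mu => dG mu 0%nat nu * N mu + G mu 0%nat * dN mu nu).

Lemma Dv_lin2 (f : nat -> nat -> nat -> R) j :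
  sumlt (S dim) (fun a => sumlt (S dim) (fun b => Dv (f a b) j)) =
  Dv (fun mu => sumlt (S dim) (fun a => sumlt (S dim) (fun b => f a b mu))) j.
Proof. unfold Dv.
  rewrite (sumlt_ext _ _ (fun a => sumlt (S dim) (fun b => f a b 0%nat) * hj j + sumlt (S dim) (fun b => f a b (S j)))).
  2:{ intros; rewrite sumlt_plus, sumlt_scal_r; reflexivity. }
  rewrite sumlt_plus, sumlt_scal_r. reflexivity. Qed.

Lemma T_Dv j : T j = Dv wT j.
Proof. unfold T, wT. rewrite <- Dv_lin2. apply sumlt_ext; intros a _. apply sumlt_ext; intros b _. unfold Dv. ring. Qed.

Lemma Dc_Dv j : Dc j = Dv wc j.
Proof. unfold Dc, wc, Dv.
  rewrite (sumlt_ext _ _ (fun mu => (dG mu 0%nat 0%nat * N mu + G mu 0%nat * dN mu 0%nat) * hj j +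
     (dG mu 0%nat (S j) * N mu + G mu 0%nat * dN mu (S j)))) by (intros; ring).
  rewrite sumlt_plus, sumlt_scal_r. reflexivity. Qed.

Lemma K1 : sumlt (S dim) (fun mu => sumlt (S dim) (fun nu => Gam dim g gi mu mu nu P * N nu)) =
   / 2 * sumlt (S dim) (fun nu => N nu * wT nu).
Proof.
  rewrite sumlt_swap. rewrite <- sumlt_scal_l. apply sumlt_ext; intros nu Hnu.
  rewrite sumlt_scal_r.
  unfold Gam. rewrite sumlt_scal_l.
  rewrite (sumlt_ext _ _ (fun mu => sumlt (S dim) (fun s0 => gi mu s0 P * pd (g s0 mu) nu P) +
      (sumlt (S dim) (fun s0 => gi mu s0 P * pd (g s0 nu) mu P) - sumlt (S dim) (fun s0 => gi mu s0 P * pd (g mu nu) s0 P)))).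
  2:{ intros mu _. rewrite <- sumlt_minus, <- sumlt_plus. apply sumlt_ext; intros; ring. }
  rewrite sumlt_plus, sumlt_minus.
  assert (E1 : sumlt (S dim) (fun mu => sumlt (S dim) (fun s0 => gi mu s0 P * pd (g s0 nu) mu P)) =
               sumlt (S dim) (fun mu => sumlt (S dim) (fun s0 => gi mu s0 P * pd (g mu nu) s0 P))).
  { rewrite sumlt_swap. apply sumlt_ext; intros a Ha. apply sumlt_ext; intros b Hb.
    rewrite (gi_sym P b a) by (auto; lia). reflexivity. }
  rewrite E1. unfold wT. rewrite sumlt_swap.
  replace (sumlt (S dim) (fun a => sumlt (S dim) (fun b => dG a b nu * Gi b a))) with
     (sumlt (S dim) (fun a => sumlt (S dim) (fun b => gi b a P * pd (g a b) nu P))).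
  2:{ apply sumlt_ext; intros; apply sumlt_ext; intros. unfold dG, Gi. ring. }
  unfold N. ring.
Qed.

Lemma pd_sym a b mu : (a <= dim)%nat -> (b <= dim)%nat -> (mu <= dim)%nat -> dG a b mu = dG b a mu.
Proof. intros Ha Hb Hmu. unfold dG. apply pd_unique.
  assert (H := proj1 (base_Ck3 _ (Hg3 b a Hb Ha)) mu P ltac:(lia) HP).
  unfold has_partial in *. eapply deriv_loc; [|exact H].
  destruct (HU P HP) as [d [Hd Hd']]. exists d. split; auto. intros t Ht.
  apply Hgsym. apply Hd'. intros k Hk. unfold upd. destruct (Nat.eqb_spec k mu); subst; auto.
  rewrite Rminus_diag, Rabs_R0; lra. Qed.

Lemma chr_low nu la : (nu <= dim)%nat -> (la <= dim)%nat ->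
  sumlt (S dim) (fun mu => G mu 0%nat * Gam dim g gi mu nu la P) =
  / 2 * (dG 0%nat la nu + dG 0%nat nu la - dG nu la 0%nat).
Proof. intros Hnu Hla. unfold Gam.
  set (X := fun s0 => pd (g s0 la) nu P + pd (g s0 nu) la P - pd (g nu la) s0 P).
  rewrite (sumlt_ext _ _ (fun mu => / 2 * sumlt (S dim) (fun s0 => g 0%nat mu P * gi mu s0 P * X s0))).
  2:{ intros mu Hmu. unfold G. rewrite Hgsym by auto.
      rewrite <- (sumlt_scal_l (S dim) (/2) (fun s0 => gi mu s0 P * (pd (g s0 la) nu P + pd (g s0 nu) la P - pd (g nu la) s0 P))).
      rewrite <- sumlt_scal_l. rewrite <- sumlt_scal_l.
      apply sumlt_ext; intros; unfold X; ring. }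
  rewrite sumlt_scal_l, sumlt_swap.
  rewrite (sumlt_ext _ _ (fun s0 => (if Nat.eqb 0 s0 then 1 else 0) * X s0)).
  2:{ intros s0 Hs0. rewrite sumlt_scal_r. rewrite Hginv by (auto; lia). reflexivity. }
  rewrite sumlt_delta_r by lia. unfold X, dG. reflexivity. Qed.

Let Q0 := sumlt (S dim) (fun mu => sumlt (S dim) (fun la => dG mu la 0%nat * N mu * N la)).

Lemma K2 : sumlt (S dim) (fun nu => N nu * wc nu) = kappa P * c + / 2 * Q0.
Proof.
  set (X1 := sumlt (S dim) (fun nu => sumlt (S dim) (fun la => dG 0%nat la nu * N nu * N la))).
  assert (A1 : sumlt (S dim) (fun nu => N nu * wc nu) =
     X1 + sumlt (S dim) (fun mu => G mu 0%nat * sumlt (S dim) (fun nu => N nu * dN mu nu))).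
  { unfold wc. rewrite (sumlt_ext _ _ (fun nu => sumlt (S dim) (fun mu => N nu * dG mu 0%nat nu * N mu) +
       sumlt (S dim) (fun mu => N nu * (G mu 0%nat * dN mu nu)))).
    2:{ intros nu _. rewrite <- sumlt_plus, <- sumlt_scal_l. apply sumlt_ext; intros; ring. }
    rewrite sumlt_plus. f_equal.
    - unfold X1. apply sumlt_ext; intros nu Hnu. apply sumlt_ext; intros mu Hmu.
      rewrite pd_sym by lia. ring.
    - rewrite sumlt_swap. apply sumlt_ext; intros mu _. rewrite <- sumlt_scal_l. apply sumlt_ext; intros; ring. }
  assert (A2 : sumlt (S dim) (fun mu => G mu 0%nat * sumlt (S dim) (fun nu => N nu * dN mu nu)) =
      kappa P * c - sumlt (S dim) (fun mu => G mu 0%nat * sumlt (S dim) (fun nu => sumlt (S dim) (fun la =>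
          Gam dim g gi mu nu la P * N nu * N la)))).
  { unfold c, gnV. rewrite <- sumlt_scal_l, <- sumlt_minus. apply sumlt_ext; intros mu Hmu.
    assert (Hk := Hkappa P mu HP ltac:(lia)). unfold nabla_vv in Hk. fold N in Hk.
    replace (kappa P * (g mu 0%nat P * nv P mu)) with (g mu 0%nat P * (kappa P * nv P mu)) by ring. rewrite <- Hk. unfold N, dN, G. ring. }
  assert (A3 : sumlt (S dim) (fun mu => G mu 0%nat * sumlt (S dim) (fun nu => sumlt (S dim) (fun la =>
          Gam dim g gi mu nu la P * N nu * N la))) =
      sumlt (S dim) (fun nu => sumlt (S dim) (fun la => / 2 * (dG 0%nat la nu + dG 0%nat nu la - dG nu la 0%nat) * N nu * N la))).
  { rewrite (sumlt_ext _ _ (fun mu => sumlt (S dim) (fun nu => sumlt (S dim) (fun la =>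
          G mu 0%nat * Gam dim g gi mu nu la P * N nu * N la)))).
    2:{ intros mu _. rewrite <- sumlt_scal_l. apply sumlt_ext; intros nu _. rewrite <- sumlt_scal_l.
        apply sumlt_ext; intros; ring. }
    rewrite sumlt_swap. apply sumlt_ext; intros nu Hnu. rewrite sumlt_swap. apply sumlt_ext; intros la Hla.
    rewrite <- chr_low by lia. rewrite sumlt_scal_r, sumlt_scal_r. reflexivity. }
  assert (A4 : sumlt (S dim) (fun nu => sumlt (S dim) (fun la => / 2 * (dG 0%nat la nu + dG 0%nat nu la - dG nu la 0%nat) * N nu * N la)) =
      / 2 * (X1 + X1 - Q0)).
  { rewrite (sumlt_ext _ _ (fun nu => / 2 * (sumlt (S dim) (fun la => dG 0%nat la nu * N nu * N la) +
       sumlt (S dim) (fun la => dG 0%nat nu la * N nu * N la) - sumlt (S dim) (fun la => dG nu la 0%nat * N nu * N la)))).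
    2:{ intros nu _. rewrite <- sumlt_plus, <- sumlt_minus, <- sumlt_scal_l. apply sumlt_ext; intros; ring. }
    rewrite sumlt_scal_l, sumlt_minus, sumlt_plus. f_equal. f_equal. f_equal.
    unfold X1. rewrite sumlt_swap. apply sumlt_ext; intros; apply sumlt_ext; intros; ring. }
  rewrite A1, A2, A3, A4. field.
Qed.

Lemma null_deriv : 0 = sumlt (S dim) (fun mu => sumlt (S dim) (fun nu =>
   (dG mu nu 0%nat * N mu + G mu nu * dN mu 0%nat) * N nu + G mu nu * N mu * dN nu 0%nat)).
Proof.
  assert (H : derivable_pt_lim (fun t => gdot dim g (upd P 0 t) (nv (upd P 0 t)) (nv (upd P 0 t))) (P 0%nat)
     (sumlt (S dim) (fun mu => sumlt (S dim) (fun nu =>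
   (dG mu nu 0%nat * N mu + G mu nu * dN mu 0%nat) * N nu + G mu nu * N mu * dN nu 0%nat)))).
  { unfold gdot. apply (deriv_sumlt (S dim) (fun mu t => sumlt (S dim) (fun nu => g mu nu (upd P 0 t) * nv (upd P 0 t) mu * nv (upd P 0 t) nu))).
    intros mu Hmu.
    apply (deriv_sumlt (S dim) (fun nu t => g mu nu (upd P 0 t) * nv (upd P 0 t) mu * nv (upd P 0 t) nu)).
    intros nu Hnu.
    assert (Hg := proj1 (base_Ck3 _ (Hg3 mu nu ltac:(lia) ltac:(lia))) 0%nat P ltac:(lia) HP).
    assert (Hm := proj1 (base_Ck1 _ (Hn1 mu ltac:(lia))) 0%nat P ltac:(lia) HP).
    assert (Hn := proj1 (base_Ck1 _ (Hn1 nu ltac:(lia))) 0%nat P ltac:(lia) HP).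
    unfold has_partial in Hg, Hm, Hn.
    assert (H1 := deriv_mult _ _ _ _ _ (deriv_mult _ _ _ _ _ Hg Hm) Hn).
    cbv beta in H1. rewrite upd_same in H1. exact H1. }
  apply (uniqueness_limite _ _ _ _ (deriv_const 0 (P 0%nat))).
  eapply deriv_loc; [|exact H].
  destruct (HU P HP) as [d [Hd Hd']]. exists d. split; auto. intros t Ht.
  cbv beta. rewrite Hnnull; [reflexivity|]. apply Hd'. intros k Hk. unfold upd. destruct (Nat.eqb_spec k 0); subst; auto.
  rewrite Rminus_diag, Rabs_R0; lra.
Qed.

Lemma K3 : c * (dN 0%nat 0%nat - sumlt dim (fun j => hj j * dN (S j) 0%nat)) = - / 2 * Q0.
Proof.
  assert (H := null_deriv).
  assert (E : sumlt (S dim) (fun mu => sumlt (S dim) (fun nu =>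
      (dG mu nu 0%nat * N mu + G mu nu * dN mu 0%nat) * N nu + G mu nu * N mu * dN nu 0%nat)) =
      Q0 + 2 * sumlt (S dim) (fun a => sumlt (S dim) (fun b => G a b * N b) * dN a 0%nat)).
  { rewrite (sumlt_ext _ _ (fun mu => sumlt (S dim) (fun nu => dG mu nu 0%nat * N mu * N nu) +
        (sumlt (S dim) (fun nu => G mu nu * N nu) * dN mu 0%nat + sumlt (S dim) (fun nu => G mu nu * N mu * dN nu 0%nat)))).
    2:{ intros mu _. rewrite <- sumlt_scal_r, <- !sumlt_plus. apply sumlt_ext; intros; ring. }
    rewrite !sumlt_plus. unfold Q0.
    assert (E2 : sumlt (S dim) (fun mu => sumlt (S dim) (fun nu => G mu nu * N mu * dN nu 0%nat)) =
        sumlt (S dim) (fun a => sumlt (S dim) (fun b => G a b * N b) * dN a 0%nat)).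
    { rewrite sumlt_swap. apply sumlt_ext; intros a Ha. rewrite sumlt_scal_r. f_equal. apply sumlt_ext; intros b Hb.
      unfold G. rewrite (Hgsym b a P HP). ring. }
    rewrite E2. ring. }
  rewrite E in H.
  rewrite (sumlt_ext _ _ (fun a => c * nlow xs a * dN a 0%nat)) in H.
  2:{ intros a Ha. unfold G, N, c, P. rewrite lower_nv by (auto; lia). reflexivity. }
  rewrite sumlt_shift in H. unfold nlow in H.
  rewrite (sumlt_ext dim _ (fun j => - (c * (hj j * dN (S j) 0%nat)))) in H by (intros; unfold hj; ring).
  rewrite sumlt_opp, sumlt_scal_l in H. lra.
Qed.

Lemma K4 : sumlt dim (fun j => Dv (dN (S j)) j) =
  sumlt (S dim) (fun mu => dN mu mu) - (dN 0%nat 0%nat - sumlt dim (fun j => hj j * dN (S j) 0%nat)).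
Proof. unfold Dv. rewrite sumlt_shift, sumlt_plus.
  rewrite (sumlt_ext dim (fun j => dN (S j) 0%nat * hj j) (fun j => hj j * dN (S j) 0%nat)) by (intros; ring). ring. Qed.

Lemma ss : s * s = - det.
Proof. unfold s. apply sqrt_sqrt. pose proof det_negP; lra. Qed.

Lemma main_id : sumlt dim DY =
  (phi P * (divg dim g gi nv P - kappa P) + sumlt (S dim) (fun mu => N mu * dphi mu)) * (s / (- c)).
Proof.
  assert (Hc : c <> 0) by (pose proof c_neg; lra).
  assert (Hs : s <> 0) by (pose proof s_pos; lra).
  set (k1 := s / (- c)). set (k3 := phi P * (- det) / (2 * s * (- c))). set (k4 := phi P * s / (c * c)).
  rewrite (sumlt_ext _ _ (fun j => k1 * (Dv dphi j * N (S j)) + (phi P * k1) * Dv (dN (S j)) j +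
     (k3 * (Dv wT j * N (S j)) + k4 * (Dv wc j * N (S j))))).
  2:{ intros j Hj. unfold DY, Ds, k1, k3, k4. rewrite T_Dv, Dc_Dv. field. auto. }
  rewrite !sumlt_plus, !sumlt_scal_l, !nder, K4.
  assert (E1 := K1). assert (E2 := K2). assert (E3 := K3). assert (E4 := ss).
  unfold divg.
  rewrite (sumlt_plus (S dim) (fun mu => pd (fun Q => nv Q mu) mu P)
     (fun mu => sumlt (S dim) (fun nu => Gam dim g gi mu mu nu P * nv P nu))).
  change (sumlt (S dim) (fun mu => pd (fun Q => nv Q mu) mu P)) with (sumlt (S dim) (fun mu => dN mu mu)).
  change (sumlt (S dim) (fun mu => sumlt (S dim) (fun nu => Gam dim g gi mu mu nu P * nv P nu))) with
     (sumlt (S dim) (fun mu => sumlt (S dim) (fun nu => Gam dim g gi mu mu nu P * N nu))).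
  set (AG := sumlt (S dim) (fun mu => sumlt (S dim) (fun nu => Gam dim g gi mu mu nu P * N nu))) in *.
  set (R0 := dN 0%nat 0%nat - sumlt dim (fun j => hj j * dN (S j) 0%nat)) in *.
  set (WT := sumlt (S dim) (fun nu => N nu * wT nu)) in *.
  set (WC := sumlt (S dim) (fun nu => N nu * wc nu)) in *.
  assert (HWT : WT = 2 * AG) by lra.
  assert (HR0 : R0 = - / 2 * Q0 / c) by (apply (Rmult_eq_reg_l c); [rewrite E3; field|]; auto).
  rewrite HWT, E2, HR0. unfold k1, k3, k4. rewrite <- E4. field. auto.
Qed.

Lemma conj1 :
  let F := fun (i : nat) (ys : nat -> R) => phi (gpt h ys) *
      (- gnV dim g nv (gpt h ys) * Ncomp dim gi h i ys) *
      (sqrt (- detg dim g (gpt h ys)) / (- gnV dim g nv (gpt h ys))) in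
  (forall i, (1 <= i <= dim)%nat -> exists l, has_partial (F i) (i - 1) xs l) /\
  sumlt dim (fun j => pd (F (S j)) j xs) =
   (phi (gpt h xs) * (divg dim g gi nv (gpt h xs) - kappa (gpt h xs))
    + sumlt (S dim) (fun mu => nv (gpt h xs) mu * pd phi mu (gpt h xs))) *
   (sqrt (- detg dim g (gpt h xs)) / (- gnV dim g nv (gpt h xs))).
Proof.
  intros F. split.
  - intros i Hi. exists (DY (i - 1)). replace i with (S (i - 1)) at 1 by lia.
    apply (d_F (i - 1)). lia.
  - rewrite (sumlt_ext _ _ DY). apply main_id.
    intros j Hj. apply pd_unique. apply (d_F j Hj).
Qed.
End AtPoint.

Lemma Ck1_const : Ck (S dim) 1 U (fun _ => 1).
Proof.
  assert (Hp : forall j x, pd (fun _ : nat -> R => 1) j x = 0).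
  { intros j x. apply pd_unique. exact (deriv_const 1 (x j)). }
  split.
  - intros j x _ _. exists 0. exact (deriv_const 1 (x j)).
  - intros j _. simpl. intros x _ eps Heps. exists 1. split; [lra|]. intros y _ _.
    rewrite !Hp, Rminus_diag, Rabs_R0. lra.
Qed.

Lemma conj2 xs : Om xs ->
  divg dim g gi nv (gpt h xs) - kappa (gpt h xs) =
    - gnV dim g nv (gpt h xs) / sqrt (- detg dim g (gpt h xs)) *
       sumlt dim (fun j =>
         pd (fun ys => Ncomp dim gi h (S j) ys * sqrt (- detg dim g (gpt h ys))) j xs).
Proof.
  intros Hxs.
  destruct (conj1 (fun _ => 1) Ck1_const xs Hxs) as [H1 H2].
  cbv zeta in H2.
  assert (Hp : forall j x, pd (fun _ : nat -> R => 1) j x = 0).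
  { intros j x. apply pd_unique. exact (deriv_const 1 (x j)). }
  rewrite (sumlt_zero (S dim) (fun mu => nv (gpt h xs) mu * pd (fun _ => 1) mu (gpt h xs))) in H2
    by (intros; rewrite Hp; ring).
  assert (Hc : gnV dim g nv (gpt h xs) < 0) by auto.
  assert (Hs : 0 < sqrt (- detg dim g (gpt h xs))).
  { apply sqrt_lt_R0. pose proof (det_neg _ (HhU xs Hxs)). lra. }
  rewrite (sumlt_ext dim _ (fun j => pd (fun ys => 1 *
      (- gnV dim g nv (gpt h ys) * Ncomp dim gi h (S j) ys) *
      (sqrt (- detg dim g (gpt h ys)) / (- gnV dim g nv (gpt h ys)))) j xs)).
  - rewrite H2. field. split; lra.
  - intros j Hj. destruct (H1 (S j) ltac:(lia)) as [l Hl]. simpl in Hl. rewrite Nat.sub_0_r in Hl.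
    rewrite (pd_unique _ _ _ _ Hl). apply pd_unique.
    unfold has_partial in *. eapply deriv_loc; [|exact Hl].
    destruct (HOm xs Hxs) as [d [Hd Hd']]. exists d. split; auto. intros t Ht.
    assert (Hys : Om (upd xs j t)).
    { apply Hd'. intros k Hk. unfold upd. destruct (Nat.eqb_spec k j); subst; auto.
      rewrite Rminus_diag, Rabs_R0; lra. }
    assert (Hc' := Hnfut _ Hys). field. lra.
Qed.

Theorem main_core :
  let ntil := fun (i : nat) (xs : nat -> R) =>
      - gnV dim g nv (gpt h xs) * Ncomp dim gi h i xs in
  let vol := fun (xs : nat -> R) =>
      sqrt (- detg dim g (gpt h xs)) / (- gnV dim g nv (gpt h xs)) in
  let theta := fun (xs : nat -> R) =>
      divg dim g gi nv (gpt h xs) - kappa (gpt h xs) in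
  (forall phi : (nat -> R) -> R, Ck (S dim) 1 U phi ->
   forall xs, Om xs ->
     let F := fun (i : nat) (ys : nat -> R) => phi (gpt h ys) * ntil i ys * vol ys in
     (forall i, (1 <= i <= dim)%nat -> exists l, has_partial (F i) (i - 1) xs l) /\
     sumlt dim (fun j => pd (F (S j)) j xs)
       = (phi (gpt h xs) * theta xs
          + sumlt (S dim) (fun mu => nv (gpt h xs) mu * pd phi mu (gpt h xs))) * vol xs)
  /\
  (forall xs, Om xs ->
     theta xs = - gnV dim g nv (gpt h xs) / sqrt (- detg dim g (gpt h xs)) *
       sumlt dim (fun j =>
         pd (fun ys => Ncomp dim gi h (S j) ys * sqrt (- detg dim g (gpt h ys))) j xs)).
Proof.
  intros ntil vol theta. split.
  - intros phi Hphi xs Hxs. exact (conj1 phi Hphi xs Hxs).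
  - intros xs Hxs. exact (conj2 xs Hxs).
Qed.
End Main.


Module MC.
From mathcomp Require Import all_boot all_order all_algebra.
From mathcomp Require Import Rstruct ring lra.
Import GRing.Theory Num.Theory.
Local Open Scope ring_scope.

Lemma sumlt_big m f : sumlt m f = \sum_(i < m) f i.
Proof. elim: m => [|m IH] /=; first by rewrite big_ord0. by rewrite big_ord_recr /= IH. Qed.

Lemma pow_exp (x : R) n : pow x n = x ^+ n.
Proof. elim: n => [|n IH] //=. by rewrite exprS IH. Qed.

Lemma m1E : IZR (Zneg 1) = - 1 :> R.
Proof. reflexivity. Qed.

Definition mx m (A : nat -> nat -> R) : 'M[R]_m := \matrix_(i < m, j < m) A i j.

Lemma detR_det m A : detR m A = \det (mx m A).
Proof.
elim: m A => [|m IH] A.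
  by rewrite det_mx00.
rewrite detR_S sumlt_big (expand_det_row _ ord0).
apply: eq_bigr => j _. rewrite /cofactor IH !mxE pow_exp m1E add0n !RmultE.
rewrite mulrCA mulrA; congr (_ * _).
congr (\det _); apply/matrixP => r c; rewrite !mxE /minorR /=.
congr (A _ _). rewrite /bump; case: (PeanoNat.Nat.ltb_spec c j) => H.
  by move/ltP: H => H; rewrite leqNgt H.
by move/leP: H => H; rewrite H add1n.
Qed.

Lemma mx_mul_id m A B : (forall a b, (a < m)%coq_nat -> (b < m)%coq_nat ->
   sumlt m (fun k => A a k * B k b) = if Nat.eqb a b then 1 else 0) ->
   mx m A *m mx m B = 1%:M.
Proof.
move=> H; apply/matrixP => a b; rewrite !mxE.
rewrite (eq_bigr (fun k : 'I_m => A a k * B k b)); last by move=> k _; rewrite !mxE.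
rewrite -(sumlt_big m (fun k => A a k * B k b)) H; try exact/ltP.
by case: (PeanoNat.Nat.eqb_spec a b) => [/val_inj -> | H1]; [rewrite eqxx | case: eqP => // E; case: H1; rewrite E].
Qed.

Lemma detR_rowrep_inv m A Gi i r : (i < m)%coq_nat ->
  (forall a b, (a < m)%coq_nat -> (b < m)%coq_nat ->
     sumlt m (fun k => A a k * Gi k b) = if Nat.eqb a b then 1 else 0) ->
  detR m (rowrep A i r) = detR m A * sumlt m (fun k => r k * Gi k i).
Proof.
move=> /ltP Hi HG.
have HM := mx_mul_id _ _ _ HG.
have Hadj : \adj (mx m A) = \det (mx m A) *: mx m Gi.
  by rewrite -[\adj _]mulmx1 -HM mulmxA mul_adj_mx mul_scalar_mx.
rewrite !detR_det sumlt_big (expand_det_row _ (Ordinal Hi)) mulr_sumr.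
apply: eq_bigr => k _.
have -> : cofactor (mx m (rowrep A i r)) (Ordinal Hi) k = cofactor (mx m A) (Ordinal Hi) k.
  rewrite /cofactor; congr (_ * \det _); apply/matrixP => a b; rewrite !mxE /rowrep.
  case: (PeanoNat.Nat.eqb_spec (lift (Ordinal Hi) a) i) => // E.
  have := neq_lift (Ordinal Hi) a. rewrite -(inj_eq val_inj) /= => /eqP H; exfalso; apply: H.
  by symmetry; exact: E.
have Hc : forall k', \adj (mx m A) k' (Ordinal Hi) = cofactor (mx m A) (Ordinal Hi) k' by move=> k'; rewrite mxE.
rewrite -Hc Hadj !mxE /rowrep PeanoNat.Nat.eqb_refl /=.
by rewrite mulrCA.
Qed.

Definition frameM m (e : nat -> nat -> R) : 'M[R]_(m.+1) := \matrix_(mu < m.+1, a < m.+1) e a mu.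

Lemma gram_eq m G e : (forall a b, (a <= m)%coq_nat -> (b <= m)%coq_nat ->
  sumlt (S m) (fun mu => sumlt (S m) (fun nu => G mu nu * e a mu * e b nu)) = minkowski a b) ->
  (frameM m e)^T *m mx m.+1 G *m frameM m e = mx m.+1 minkowski.
Proof.
move=> H; apply/matrixP => a b; rewrite !mxE.
have Ha : (a <= m)%coq_nat by apply/leP; rewrite -ltnS.
have Hb : (b <= m)%coq_nat by apply/leP; rewrite -ltnS.
rewrite -(H a b Ha Hb) sumlt_big.
rewrite (eq_bigr (fun nu : 'I_m.+1 => \sum_(mu < m.+1) G mu nu * e a mu * e b nu)); last first.
  move=> nu _; rewrite !mxE mulr_suml; apply: eq_bigr => mu _; rewrite !mxE.
  by rewrite [e a mu * _]mulrC.
rewrite exchange_big; apply: eq_bigr => mu _; by rewrite sumlt_big.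
Qed.

Lemma det_mink m : \det (mx m.+1 minkowski) = -1.
Proof.
have -> : mx m.+1 minkowski = diag_mx (\row_(a < m.+1) minkowski a a).
  apply/matrixP => a b; rewrite !mxE /minkowski.
  case: (@eqP _ a b) => [-> | H]; first by rewrite PeanoNat.Nat.eqb_refl mulr1n.
  rewrite mulr0n; case: (PeanoNat.Nat.eqb_spec a b) => // E.
  by case: H; apply: val_inj.
rewrite det_diag big_ord_recl !mxE /= big1 ?mulr1 //.
move=> i _; rewrite !mxE /minkowski /= PeanoNat.Nat.eqb_refl //.
Qed.

Lemma det_neg m G e : (forall a b, (a <= m)%coq_nat -> (b <= m)%coq_nat ->
  sumlt (S m) (fun mu => sumlt (S m) (fun nu => G mu nu * e a mu * e b nu)) = minkowski a b) ->
  detR (S m) G < 0.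
Proof.
move=> /gram_eq H; have := f_equal determinant H.
rewrite det_mink !det_mulmx det_tr detR_det => E.
rewrite Order.TotalTheory.ltNge; apply/negP => Hg.
have : 0 <= \det (frameM m e) * \det (mx m.+1 G) * \det (frameM m e).
  by rewrite mulrC mulrA -expr2; apply: mulr_ge0 => //; apply: sqr_ge0.
by rewrite E ler0N1.
Qed.

Definition Bf m (G : nat -> nat -> R) (x y : nat -> R) :=
  sumlt (S m) (fun mu => sumlt (S m) (fun nu => G mu nu * x mu * y nu)).

Definition cvec m (x : nat -> R) : 'cV[R]_(m.+1) := \col_(i < m.+1) x i.

Lemma Bf_mx m G x y : Bf m G x y = ((cvec m x)^T *m mx m.+1 G *m cvec m y) ord0 ord0.
Proof.
rewrite /Bf sumlt_big !mxE.
rewrite (eq_bigr (fun mu : 'I_m.+1 => \sum_(nu < m.+1) G mu nu * x mu * y nu)); last by move=> mu _; rewrite sumlt_big.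
rewrite exchange_big /=; apply: eq_bigr => nu _.
rewrite !mxE mulr_suml; apply: eq_bigr => mu _; rewrite !mxE.
by rewrite [x mu * _]mulrC.
Qed.

Lemma mink_diag m : mx m.+1 minkowski = diag_mx (\row_(a < m.+1) (if a == ord0 then -1 else 1)).
Proof.
apply/matrixP => a b; rewrite !mxE /minkowski.
case: (@eqP _ a b) => [-> | H].
  rewrite PeanoNat.Nat.eqb_refl mulr1n; case: (PeanoNat.Nat.eqb_spec b 0) => E.
    by have -> : b = ord0 by apply: val_inj. 
  by case: eqP => // E'; case: E; rewrite E'.
rewrite mulr0n; case: (PeanoNat.Nat.eqb_spec a b) => // E.
by case: H; apply: val_inj.
Qed.

Lemma mink_sq m : mx m.+1 minkowski *m mx m.+1 minkowski = 1%:M.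
Proof.
rewrite mink_diag mul_mx_diag; apply/matrixP => a b; rewrite !mxE.
case: (@eqP _ a b) => [-> | H]; last by rewrite mul0r.
by rewrite mulr1n; case: eqP => _; rewrite ?mulrNN mulr1.
Qed.

Lemma quad_mink m (x y : 'cV[R]_(m.+1)) :
  (x^T *m mx m.+1 minkowski *m y) ord0 ord0 =
  - (x ord0 ord0 * y ord0 ord0) + \sum_(k < m) x (lift ord0 k) ord0 * y (lift ord0 k) ord0.
Proof.
rewrite mink_diag mul_mx_diag !mxE big_ord_recl !mxE eqxx mulrN1 mulNr.
congr (_ + _); apply: eq_bigr => k _; rewrite !mxE.
have -> : (lift ord0 k == ord0) = false by apply/negP => /eqP /(congr1 val).
by rewrite mulr1.
Qed.

Lemma null_prop m G e u v :
  (forall a b, (a <= m)%coq_nat -> (b <= m)%coq_nat ->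
    sumlt (S m) (fun mu => sumlt (S m) (fun nu => G mu nu * e a mu * e b nu)) = minkowski a b) ->
  Bf m G u u = 0 -> Bf m G v v = 0 -> Bf m G u v = 0 ->
  (exists mu, (mu <= m)%coq_nat /\ v mu <> 0) ->
  exists lam, forall mu, (mu <= m)%coq_nat -> u mu = lam * v mu.
Proof.
move=> Hfr Huu Hvv Huv [mu0 [Hmu0 Hv0]].
have HE := gram_eq _ _ _ Hfr.
set E := frameM m e in HE *; set Gm := mx m.+1 G in HE *; set eta := mx m.+1 minkowski in HE *.
set L := eta *m E^T *m Gm.
have HLE : L *m E = 1%:M.
  have -> : L *m E = eta *m (E^T *m Gm *m E) by rewrite /L !mulmxA.
  by rewrite HE mink_sq.
have HEL : E *m L = 1%:M := mulmx1C HLE.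
set a := L *m cvec m u; set b := L *m cvec m v.
have Hu : cvec m u = E *m a by rewrite /a mulmxA HEL mul1mx.
have Hv : cvec m v = E *m b by rewrite /b mulmxA HEL mul1mx.
have Q : forall x y : 'cV[R]_(m.+1), ((E *m x)^T *m Gm *m (E *m y)) ord0 ord0 = (x^T *m eta *m y) ord0 ord0.
  by move=> x y; rewrite trmx_mul -HE !mulmxA.
rewrite !Bf_mx Hu Hv !Q !quad_mink in Huu Hvv Huv.
set a0 := a ord0 ord0 in Huu Huv; set b0 := b ord0 ord0 in Hvv Huv.
have Hsq : forall k, 0 <= (b0 * a (lift ord0 k) ord0 - a0 * b (lift ord0 k) ord0) ^+ 2 by move=> k; apply: sqr_ge0.
have Hsum : \sum_(k < m) (b0 * a (lift ord0 k) ord0 - a0 * b (lift ord0 k) ord0) ^+ 2 = 0.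
  rewrite (eq_bigr (fun k : 'I_m => b0 ^+ 2 * (a (lift ord0 k) ord0 * a (lift ord0 k) ord0) +
      (- (2 * a0 * b0)) * (a (lift ord0 k) ord0 * b (lift ord0 k) ord0) +
      a0 ^+ 2 * (b (lift ord0 k) ord0 * b (lift ord0 k) ord0))); last by move=> k _; ring.
  rewrite !big_split /= -!mulr_sumr.
  have E1 : \sum_(k < m) a (lift ord0 k) ord0 * a (lift ord0 k) ord0 = a0 * a0 by move: Huu; lra.
  have E2 : \sum_(k < m) b (lift ord0 k) ord0 * b (lift ord0 k) ord0 = b0 * b0 by move: Hvv; lra.
  have E3 : \sum_(k < m) a (lift ord0 k) ord0 * b (lift ord0 k) ord0 = a0 * b0 by move: Huv; lra.
  rewrite E1 E2 E3; ring.
have Hk : forall k : 'I_m, b0 * a (lift ord0 k) ord0 = a0 * b (lift ord0 k) ord0.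
  move=> k; apply/eqP; rewrite -subr_eq0 -sqrf_eq0; apply/eqP.
  by apply: (psumr_eq0P (fun k _ => Hsq k) Hsum).
have Hb0 : b0 != 0.
  apply/negP => /eqP Hb0; apply: Hv0.
  have Hbk : forall k : 'I_m, b (lift ord0 k) ord0 = 0.
    have Hs2 : \sum_(k < m) b (lift ord0 k) ord0 ^+ 2 = 0.
      rewrite (eq_bigr (fun k : 'I_m => b (lift ord0 k) ord0 * b (lift ord0 k) ord0)); last by move=> k _; rewrite expr2.
      by move: Hvv; rewrite Hb0; lra.
    move=> k; apply/eqP; rewrite -sqrf_eq0; apply/eqP.
    by apply: (psumr_eq0P (fun k _ => sqr_ge0 _) Hs2).
  have Hb : b = 0.
    apply/matrixP => i j; rewrite [RHS]mxE ord1.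
    by case: (unliftP ord0 i) => [k -> | ->]; [apply: Hbk | apply: Hb0].
  have Hmu : (mu0 < m.+1)%N by apply/ltP; apply/le_n_S.
  have := congr1 (fun M : 'cV[R]_(m.+1) => M (Ordinal Hmu) ord0) Hv.
  by rewrite Hb mulmx0 !mxE.
exists (a0 / b0) => mu Hmu.
have Hab : a = (a0 / b0) *: b.
  apply/matrixP => i j; rewrite [RHS]mxE ord1.
  case: (unliftP ord0 i) => [k -> | ->].
    by apply: (mulfI Hb0); rewrite Hk; field.
    by rewrite divfK.
have Hmu' : (mu < m.+1)%N by apply/ltP; apply/le_n_S.
have := congr1 (fun M : 'cV[R]_(m.+1) => M (Ordinal Hmu') ord0) Hu.
by rewrite Hab -scalemxAr -Hv !mxE.
Qed.

Lemma det_neg' m G e : (forall a b, (a <= m)%coq_nat -> (b <= m)%coq_nat ->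
  sumlt (S m) (fun mu => sumlt (S m) (fun nu => G mu nu * e a mu * e b nu)) = minkowski a b) ->
  Rlt (detR (S m) G) 0.
Proof. by move=> H; apply/RltP; apply: det_neg H. Qed.

End MC.

Theorem mainTheorem9
  (dim : nat) (Hdim : (1 <= dim)%nat)
  (* chart domain U in R^(dim+1) (cylinder coordinates, V = partial_0) *)
  (U : (nat -> R) -> Prop) (HU : is_open (S dim) U)
  (* metric and inverse metric components *)
  (g gi : nat -> nat -> (nat -> R) -> R)
  (Hg3 : forall mu nu, (mu <= dim)%nat -> (nu <= dim)%nat -> Ck (S dim) 3 U (g mu nu))
  (Hgsym : forall mu nu P, U P -> g mu nu P = g nu mu P)
  (Hginv : forall mu nu P, (mu <= dim)%nat -> (nu <= dim)%nat -> U P ->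
     sumlt (S dim) (fun s => g mu s P * gi s nu P) = (if Nat.eqb mu nu then 1 else 0))
  (Hlor : forall P, U P -> lorentzian_at dim g P)
  (* V = partial_0 is timelike (and defines the future) *)
  (HV : forall P, U P -> g 0%nat 0%nat P < 0)
  (* H = graph of h over the open set Om of R^dim *)
  (Om : (nat -> R) -> Prop) (HOm : is_open dim Om)
  (h : (nat -> R) -> R) (Hh2 : Ck dim 2 Om h)
  (HhU : forall xs, Om xs -> U (gpt h xs))
  (* H is a null hypersurface: its normal dx^0 - d_i h dx^i is null *)
  (Hnull : forall xs, Om xs ->
     let nu := fun mu => match mu with O => 1 | S j => - pd h j xs end in
     sumlt (S dim) (fun mu => sumlt (S dim) (fun la =>
        gi mu la (gpt h xs) * nu mu * nu la)) = 0)
  (* n : C^1 lightlike vector field on U, tangent to H and future directed *)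
  (nv : (nat -> R) -> nat -> R)
  (Hn1 : forall mu, (mu <= dim)%nat -> Ck (S dim) 1 U (fun Q => nv Q mu))
  (Hnnull : forall P, U P -> gdot dim g P (nv P) (nv P) = 0)
  (Hnnz : forall P, U P -> exists mu, (mu <= dim)%nat /\ nv P mu <> 0)
  (Hntan : forall xs, Om xs ->
     nv (gpt h xs) 0%nat = sumlt dim (fun j => pd h j xs * nv (gpt h xs) (S j)))
  (Hnfut : forall xs, Om xs -> gnV dim g nv (gpt h xs) < 0)
  (* nabla_n n = kappa n *)
  (kappa : (nat -> R) -> R)
  (Hkappa : forall P mu, U P -> (mu <= dim)%nat ->
     nabla_vv dim g gi nv mu P = kappa P * nv P mu) :
  let ntil := fun (i : nat) (xs : nat -> R) =>
      - gnV dim g nv (gpt h xs) * Ncomp dim gi h i xs in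
  let vol := fun (xs : nat -> R) =>
      sqrt (- detg dim g (gpt h xs)) / (- gnV dim g nv (gpt h xs)) in
  let theta := fun (xs : nat -> R) =>
      divg dim g gi nv (gpt h xs) - kappa (gpt h xs) in
  (forall phi : (nat -> R) -> R, Ck (S dim) 1 U phi ->
   forall xs, Om xs ->
     let F := fun (i : nat) (ys : nat -> R) => phi (gpt h ys) * ntil i ys * vol ys in
     (forall i, (1 <= i <= dim)%nat -> exists l, has_partial (F i) (i - 1) xs l) /\
     sumlt dim (fun j => pd (F (S j)) j xs)
       = (phi (gpt h xs) * theta xs
          + sumlt (S dim) (fun mu => nv (gpt h xs) mu * pd phi mu (gpt h xs))) * vol xs)
  /\
  (forall xs, Om xs ->
     theta xs = - gnV dim g nv (gpt h xs) / sqrt (- detg dim g (gpt h xs)) *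
       sumlt dim (fun j =>
         pd (fun ys => Ncomp dim gi h (S j) ys * sqrt (- detg dim g (gpt h ys))) j xs)).
Proof.
  exact (main_core dim Hdim U HU g gi Hg3 Hgsym Hginv Hlor Om HOm h Hh2 HhU Hnull nv Hn1 Hnnull Hntan Hnfut
    kappa Hkappa MC.detR_rowrep_inv MC.det_neg' MC.null_prop).
Qed.
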